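(* For $\theta>0$ let $U_1,U_2,\dots$ be i.i.d. $\mathrm{Beta}(1,\theta)$ random variables, and set $X_1=U_1$, $X_k=(1-U_1)\cdots(1-U_{k-1})U_k$ for $k\ge2$. Fix $n\ge1$ and let $\Pi^{\mathrm{gem}}_{n,\theta}$ be the law of $(X_1,\dots,X_n)$ on $\Delta_n=\{(x_1,\dots,x_n):x_k\ge0,\ \sum_{i=1}^n x_i\le1\}$. Then, as $\theta\to\infty$, $\{\Pi^{\mathrm{gem}}_{n,\theta}:\theta>0\}$ satisfies an LDP on $\Delta_n$ with speed $\theta$ and rate function $$S_n(\mathbf x)=\begin{cases}\log\dfrac1{1-\sum_{k=1}^n x_k},&\mathbf x\in\Delta_n,\ \sum_{k=1}^n x_k<1,\\ \infty,&\text{otherwise}.\end{cases}$$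
   Context: An LDP with speed $\theta$ uses normalization $\theta^{-1}\log$ as $\theta\to\infty$. *)

(* Defs.v *)
From HB Require Import structures.
From mathcomp Require Import all_boot all_order all_algebra.
From mathcomp Require Import all_classical all_reals all_analysis.
Set Implicit Arguments. Unset Strict Implicit. Unset Printing Implicit Defensive.
Import Order.TTheory GRing.Theory Num.Theory.
Import numFieldNormedType.Exports numFieldTopology.Exports.
Local Open Scope classical_set_scope.
Local Open Scope ring_scope.

Section GEM.
Variable R : realType.

(* Density of Beta(1, theta) w.r.t. Lebesgue measure on [0,1]:
   1/B(1,theta) * (1-u)^(theta-1) = theta * (1-u)^(theta-1). *)
Definition beta1_pdf (theta u : R) : R := theta * (1 - u) `^ (theta - 1).

(* Integral of f(U_1,...,U_n) (f >= 0) for U_1,...,U_n i.i.d. Beta(1,theta),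
   computed as an iterated integral against the product of the Beta(1,theta)
   laws (Tonelli). *)
Fixpoint iid_beta1_int (n : nat) (theta : R) (f : seq R -> \bar R) : \bar R :=
  match n with
  | 0 => f [::]
  | m.+1 => (\int[@lebesgue_measure R]_(u in `[0%R, 1%R])
               ((beta1_pdf theta u)%:E * iid_beta1_int m theta (fun s => f (u :: s))))%E
  end.

(* Stick breaking: r is the remaining mass (1-U_1)...(1-U_{k-1}). *)
Fixpoint stick (r : R) (s : seq R) : seq R :=
  match s with
  | [::] => [::]
  | u :: s' => r * u :: stick (r * (1 - u)) s'
  end.

Definition gem_vec (n : nat) (s : seq R) : 'rV[R]_n :=
  \row_(i < n) nth 0 (stick 1 s) i.

Definition Pi_gem (n : nat) (theta : R) (A : set 'rV[R]_n) : \bar R :=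
  iid_beta1_int n theta (fun s => ((\1_A (gem_vec n s) : R))%:E).

Definition Delta (n : nat) : set 'rV[R]_n :=
  [set x | (forall i, 0 <= x ord0 i) /\ \sum_(i < n) x ord0 i <= 1].

Definition S_rate (n : nat) (x : 'rV[R]_n) : \bar R :=
  if [forall i, 0 <= x ord0 i] && (\sum_(i < n) x ord0 i < 1)
  then (ln (1 / (1 - \sum_(i < n) x ord0 i)))%:E
  else +oo%E.

End GEM.

(* Closed (open) subsets of D are
   exactly the sets F `&` D with F closed (open) in X. *)
Definition log_speed {R : realType} (theta : R) (p : \bar R) : \bar R :=
  if p == 0%E then -oo%E else (ln (fine p) / theta)%:E.

Definition LDP {R : realType} {X : topologicalType} (D : set X)
    (P : R -> set X -> \bar R) (I : X -> \bar R) : Prop :=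
  [/\ (* I is a rate function on D: nonnegative and lower semicontinuous *)
      (forall x, D x -> (0 <= I x)%E),
      (forall a : R, exists C : set X, closed C /\
          [set x | D x /\ (I x <= a%:E)%E] = C `&` D),
      (forall F : set X, closed F ->
         (limf_esup (fun theta => log_speed theta (P theta (F `&` D))) (pinfty_nbhs R)
           <= - ereal_inf (I @` (F `&` D)))%E) &
      (forall G : set X, open G ->
         (- ereal_inf (I @` (G `&` D))
           <= limf_einf (fun theta => log_speed theta (P theta (G `&` D))) (pinfty_nbhs R))%E)].

(* Main.v *)
Require Import Defs.
From HB Require Import structures.
From mathcomp Require Import all_boot all_order all_algebra.
From mathcomp Require Import all_classical all_reals all_analysis.
From mathcomp Require Import ring lra.
Import numFieldNormedType.Exports numFieldTopology.Exports.
Set Implicit Arguments. Unset Strict Implicit. Unset Printing Implicit Defensive.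
Import Order.TTheory GRing.Theory Num.Theory.
Local Open Scope classical_set_scope.
Local Open Scope ring_scope.

Section Aux.
Variable R : realType.
Local Open Scope ereal_scope.

Lemma le_int_patch (D E : set R) (f g : R -> \bar R) :
  (forall x, D x -> 0 <= f x) ->
  (forall x, E x -> 0 <= g x) ->
  (forall x, (f \_ D) x <= (g \_ E) x) ->
  \int[@lebesgue_measure R]_(x in D) f x <= \int[@lebesgue_measure R]_(x in E) g x.
Proof.
move=> f0 g0 fg.
rewrite ge0_integralE // [X in _ <= X]ge0_integralE //.
apply: ereal_sup_le => _ [h hf <-]; exists h => //= x.
exact: le_trans (hf x) (fg x).
Qed.

Lemma pdf_ge0 (th u : R) : (0 <= th)%R -> (0 <= beta1_pdf th u)%R.
Proof. by move=> h; rewrite /beta1_pdf mulr_ge0 // powR_ge0. Qed.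

Lemma iid_ge0 n (th : R) f : (0 <= th)%R -> (forall s, 0 <= f s) ->
  0 <= iid_beta1_int n th f.
Proof.
elim: n f => [|n IH] f th0 f0 //=.
apply: integral_ge0 => x _; apply: mule_ge0; first by rewrite lee_fin pdf_ge0.
exact: IH.
Qed.

Lemma int01_cst (c : R) :
  \int[@lebesgue_measure R]_(x in `[0%R, 1%R]) (cst c%:E) x = c%:E.
Proof.
rewrite integral_cst //= lebesgue_measure_itv /=.
by rewrite lte_fin ltr01 oppr0 adde0 mule1.
Qed.


Definition in01 (u : R) := ((0 <= u) && (u < 1))%R.

Lemma iid_upper n (th a : R) f : (1 < th)%R -> (0 <= a)%R -> (forall s, 0 <= f s) ->
  (forall s, size s = n -> all in01 s ->
     f s <= (a * (\prod_(u <- s) (1 - u)) `^ (1 - th))%:E) ->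
  iid_beta1_int n th f <= (a * th ^+ n)%:E.
Proof.
move=> th1; elim: n a f => [|n IH] a f a0 f0 hf /=.
  by have := hf [::] erefl erefl; rewrite big_nil powR1 expr0.
rewrite -int01_cst; apply: le_int_patch.
- move=> x _; apply: mule_ge0; first by rewrite lee_fin pdf_ge0 // ltW // (lt_trans ltr01).
  by apply: iid_ge0 => //; rewrite ltW // (lt_trans ltr01).
- by move=> x _ /=; rewrite lee_fin mulr_ge0 // exprn_ge0 // ltW // (lt_trans ltr01).
move=> x; rewrite /patch; case: ifPn => //; rewrite inE /= in_itv /= => /andP [x0 x1].
have th0 : (0 < th)%R by rewrite (lt_trans ltr01).
have [->|xlt1] := eqVneq x 1%R.
  rewrite /beta1_pdf subrr powR0; last by rewrite subr_eq0 gt_eqF.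
  by rewrite mulr0 mul0e lee_fin mulr_ge0 // exprn_ge0 // ltW.
have xl : (x < 1)%R by rewrite lt_neqAle xlt1.
have h1x : (0 < 1 - x)%R by rewrite subr_gt0.
have := IH (a * (1 - x) `^ (1 - th))%R (fun s => f (x :: s)).
have -> : (a * (1 - x) `^ (1 - th) * th ^+ n = a * th ^+ n * (1 - x) `^ (1 - th))%R.
  by rewrite mulrAC.
move=> /(_ _ _ _) IH'.
have := IH' (mulr_ge0 a0 (powR_ge0 _ _)) (fun s => f0 _).
move=> /(_ _) H.
have {}H : iid_beta1_int n th (fun s => f (x :: s)) <= (a * th ^+ n * (1 - x) `^ (1 - th))%:E.
  apply: H => s ss ass; have := hf (x :: s); rewrite /= ss ass andbT /in01 x0 xl.
  move=> /(_ erefl erefl); rewrite big_cons powRM ?(ltW h1x) //.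
    by rewrite mulrA.
  rewrite big_seq; apply: prodr_ge0 => i /(allP ass) /andP[_ ].
  by rewrite subr_ge0 => /ltW.
apply: le_trans (lee_wpmul2l _ H) _; first by rewrite lee_fin pdf_ge0 ?ltW.
rewrite -EFinM lee_fin /beta1_pdf.
have E : ((1 - x) `^ (th - 1) * (1 - x) `^ (1 - th) = 1)%R.
  have e0 : (th - 1 + (1 - th) = 0)%R by ring.
  rewrite -powRD; first by rewrite e0 powRr0.
  by apply/implyP => _; rewrite gt_eqF.
rewrite le_eqVlt; apply/orP; left; apply/eqP; rewrite exprS.
transitivity (th * a * th ^+ n * ((1 - x) `^ (th - 1) * (1 - x) `^ (1 - th)))%R.
  by rewrite -!mulrA; congr (_ * _)%R; rewrite mulrCA; congr (_ * _)%R; rewrite mulrCA mulrA.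
by rewrite E mulr1 -mulrA mulrCA mulrA.
Qed.

Definition inbox (rho : R) (ts s : seq R) :=
  all2 (fun t u => (t <= u) && (u <= 1 - (1 - t) * rho))%R ts s.

Lemma iid_lower (th rho c : R) ts f : (1 <= th)%R -> (0 < rho < 1)%R -> (0 <= c)%R ->
  all in01 ts -> (forall s, 0 <= f s) ->
  (forall s, inbox rho ts s -> c%:E <= f s) ->
  (c * (th * rho `^ (th - 1) * (1 - rho)) ^+ size ts *
     (\prod_(t <- ts) (1 - t)) `^ th)%:E <= iid_beta1_int (size ts) th f.
Proof.
move=> th1 /andP[r0 r1]; elim: ts c f => [|t ts IH] c f c0 ats f0 hf /=.
  by rewrite big_nil powR1 expr0 !mulr1; apply: hf.
move: ats => /= /andP[/andP[t0 t1] ats].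
have th0 : (0 <= th)%R by rewrite (le_trans ler01).
have h1t : (0 < 1 - t)%R by rewrite subr_gt0.
have P0 : (0 <= \prod_(u <- ts) (1 - u))%R.
  rewrite big_seq; apply: prodr_ge0 => i /(allP ats) /andP[_ ].
  by rewrite subr_ge0 => /ltW.
set q := (th * rho `^ (th - 1) * (1 - rho))%R.
set W := (c * q ^+ size ts * (\prod_(u <- ts) (1 - u)) `^ th)%R.
set K := (th * ((1 - t) * rho) `^ (th - 1) * W)%R.
have W0 : (0 <= W)%R.
  rewrite /W /q; do ![apply: mulr_ge0|apply: exprn_ge0|apply: powR_ge0] => //.
  by rewrite subr_ge0 ltW.
have K0 : (0 <= K)%R by rewrite /K mulr_ge0 // mulr_ge0 // powR_ge0.
set b := (1 - (1 - t) * rho)%R.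
have tb : (t < b)%R.
  have : ((1 - t) * rho < 1 - t)%R by rewrite -[X in (_ < X)%R]mulr1 ltr_pM2l.
  rewrite /b; lra.
have b1 : (b <= 1)%R.
  have : (0 <= (1 - t) * rho)%R by rewrite mulr_ge0 // ltW.
  rewrite /b; lra.
have -> : (c * q ^+ (size ts).+1 * (\prod_(u <- (t :: ts)) (1 - u)) `^ th)%R = (K * (b - t))%R.
  have -> : (b - t = (1 - t) * (1 - rho))%R by rewrite /b; ring.
  rewrite /K /W big_cons powRM ?(ltW h1t) // powRM ?(ltW h1t) ?ltW //.
  have E : ((1 - t) `^ (th - 1) * (1 - t) = (1 - t) `^ th)%R.
    have := @mulr_powRB1 R (1 - t) th (ltW h1t).
    rewrite mulrC; apply.
    by rewrite (lt_le_trans ltr01).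
  rewrite -E exprS /q; ring.
have -> : ((K * (b - t))%:E = \int[@lebesgue_measure R]_(x in `[t, b]) (cst K%:E) x).
  rewrite integral_cst //= lebesgue_measure_itv /= lte_fin tb -EFinD.
  by rewrite -EFinM.
apply: le_int_patch.
- by move=> x _; rewrite lee_fin.
- move=> x _; apply: mule_ge0; first by rewrite lee_fin pdf_ge0.
  exact: iid_ge0.
move=> x; rewrite /patch; case: ifPn; last first.
  move=> _; case: ifPn => // _; apply: mule_ge0; first by rewrite lee_fin pdf_ge0.
  exact: iid_ge0.
rewrite inE /= in_itv /= => /andP [tx xb].
rewrite ifT; last by rewrite inE /= in_itv /= (le_trans t0 tx) (le_trans xb b1).
rewrite /K EFinM; apply: lee_pmul.
- by rewrite lee_fin mulr_ge0 // powR_ge0.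
- by rewrite lee_fin.
- rewrite lee_fin /beta1_pdf ler_pM2l ?(lt_le_trans ltr01) //.
  apply: ge0_ler_powR.
  - by rewrite subr_ge0.
  - by rewrite nnegrE mulr_ge0 // ltW.
  - by rewrite nnegrE subr_ge0 (le_trans xb b1).
  - by move: xb; rewrite /b; lra.
- apply: IH => // s hs; apply: hf => /=; rewrite tx /=.
  by rewrite xb.
Qed.


Local Close Scope ereal_scope.

Definition in01c (u : R) := (0 <= u) && (u <= 1).

Lemma size_stick (r : R) s : size (stick r s) = size s.
Proof. by elim: s r => //= u s IH r; rewrite IH. Qed.

Lemma sum_stick (r : R) s : \sum_(x <- stick r s) x = r - r * \prod_(u <- s) (1 - u).
Proof.
elim: s r => [|u s IH] r /=; first by rewrite !big_nil mulr1 subrr.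
by rewrite !big_cons IH; ring.
Qed.

Lemma stick_ge0 (r : R) s : 0 <= r -> all in01c s -> all (fun x => 0 <= x) (stick r s).
Proof.
elim: s r => //= u s IH r r0 /andP [/andP [u0 u1] hs].
rewrite mulr_ge0 //=; apply: IH => //; rewrite mulr_ge0 // subr_ge0 //.
Qed.

Lemma prod_ge0 (s : seq R) : all in01c s -> 0 <= \prod_(u <- s) (1 - u).
Proof.
move=> hs; rewrite big_seq; apply: prodr_ge0 => i /(allP hs) /andP[_ ].
by rewrite subr_ge0.
Qed.

Lemma prod_gt0 (s : seq R) : all in01 s -> 0 < \prod_(u <- s) (1 - u).
Proof.
move=> hs; rewrite big_seq; apply: prodr_gt0 => i /(allP hs) /andP[_ ].
by rewrite subr_gt0.
Qed.

Lemma in01_c (s : seq R) : all in01 s -> all in01c s.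
Proof. by move=> /allP h; apply/allP => u /h /andP[a b]; rewrite /in01c a ltW. Qed.

Lemma gem_sum n (s : seq R) : size s = n ->
  \sum_(i < n) gem_vec n s ord0 i = 1 - \prod_(u <- s) (1 - u).
Proof.
move=> ss.
transitivity (\sum_(i < n) nth 0 (stick 1 s) i).
  by apply: eq_bigr => i _; rewrite mxE.
rewrite -(mul1r (\prod_(u <- s) (1 - u))) -sum_stick (big_nth 0) big_mkord.
by rewrite size_stick ss.
Qed.

Lemma gem_ge0 n (s : seq R) i : all in01c s -> 0 <= gem_vec n s ord0 i.
Proof.
move=> hs; rewrite mxE.
have := stick_ge0 ler01 hs => /allP h.
have [lt|ge] := ltnP i (size (stick 1 s)).
  by apply: h; rewrite mem_nth.
by rewrite nth_default.
Qed.

Lemma gem_D n (s : seq R) : size s = n -> all in01c s -> @Delta R n (gem_vec n s).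
Proof.
move=> ss hs; split; first by move=> i; exact: gem_ge0.
rewrite gem_sum // lerBlDr lerDl; exact: prod_ge0.
Qed.

Lemma gem_S n (s : seq R) : size s = n -> all in01 s ->
  S_rate (gem_vec n s) = (- ln (\prod_(u <- s) (1 - u)))%:E.
Proof.
move=> ss hs; have P0 := prod_gt0 hs.
rewrite /S_rate gem_sum //.
have -> : [forall i, 0 <= gem_vec n s ord0 i].
  by apply/forallP => i; apply: gem_ge0; exact: in01_c.
have -> : 1 - \prod_(u <- s) (1 - u) < 1 by rewrite ltrBlDr ltrDl.
by rewrite /= opprB addrC subrK div1r lnV.
Qed.


Lemma abs_mix (r r' u t eta : R) : 0 <= r <= 1 -> 0 <= r' <= 1 ->
  0 <= u <= 1 -> 0 <= t <= 1 -> `|u - t| <= eta ->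
  `|r * u - r' * t| <= `|r - r'| + eta.
Proof.
move=> /andP[r0 r1] /andP[r'0 r'1] /andP[u0 u1] /andP[t0 t1] ut.
have -> : r * u - r' * t = (r - r') * u + r' * (u - t) by ring.
apply: le_trans (ler_normD _ _) _; rewrite !normrM.
apply: lerD.
  by rewrite -[X in _ <= X]mulr1 ler_wpM2l // ger0_norm.
rewrite ger0_norm //; apply: le_trans (ler_wpM2r (normr_ge0 _) r'1) _.
by rewrite mul1r.
Qed.

Lemma stick_err (s ts : seq R) (r r' eta : R) : size s = size ts ->
  all in01c s -> all in01c ts -> all2 (fun u t => `|u - t| <= eta) s ts ->
  0 <= eta -> 0 <= r <= 1 -> 0 <= r' <= 1 ->
  forall i, `|nth 0 (stick r s) i - nth 0 (stick r' ts) i| <= `|r - r'| + i.+1%:R * eta.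
Proof.
elim: s ts r r' => [|u s IH] [|t ts] //= r r' ss hs hts hst eta0 hr hr' i.
  by rewrite !nth_nil subrr normr0 addr_ge0 // mulr_ge0.
move: ss => [ss]; move: hs hts hst => /andP[hu hs] /andP[ht hts] /andP[hut hst].
case: i => [|i] /=.
  by rewrite mul1r; apply: abs_mix.
move: hr hr' hu ht => /andP[r0 r1] /andP[r'0 r'1] /andP[u0 u1] /andP[t0 t1].
have h1 : 0 <= r * (1 - u) <= 1.
  rewrite mulr_ge0 ?subr_ge0 //= -[X in _ <= X]mulr1 ler_pM //; rewrite ?subr_ge0 //.
  by rewrite lerBlDr lerDl.
have h2 : 0 <= r' * (1 - t) <= 1.
  rewrite mulr_ge0 ?subr_ge0 //= -[X in _ <= X]mulr1 ler_pM //; rewrite ?subr_ge0 //.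
  by rewrite lerBlDr lerDl.
apply: le_trans (IH ts _ _ ss hs hts hst eta0 h1 h2 i) _.
have : `|r * (1 - u) - r' * (1 - t)| <= `|r - r'| + eta.
  apply: abs_mix; rewrite ?r0 ?r1 ?r'0 ?r'1 //.
  - by rewrite subr_ge0 u1 lerBlDr lerDl.
  - by rewrite subr_ge0 t1 lerBlDr lerDl.
  - have -> : 1 - u - (1 - t) = - (u - t) by ring.
    by rewrite normrN.
rewrite -[i.+2%:R]natr1 mulrDl mul1r; lra.
Qed.


Fixpoint target (r : R) (xs : seq R) : seq R :=
  match xs with
  | [::] => [::]
  | x :: xs' => x / r :: target (r - x) xs'
  end.

Lemma size_target r xs : size (target r xs) = size xs.
Proof. by elim: xs r => //= x xs IH r; rewrite IH. Qed.

Lemma sum_ge0l (xs : seq R) : all (fun x => 0 <= x) xs -> 0 <= \sum_(x <- xs) x.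
Proof.
move=> h; rewrite big_seq; apply: sumr_ge0 => i; exact: (allP h).
Qed.

Lemma target_ok r xs : all (fun x => 0 <= x) xs -> 0 < r - \sum_(x <- xs) x ->
  stick r (target r xs) = xs /\ all in01 (target r xs).
Proof.
elim: xs r => [|x xs IH] r //= /andP[x0 hxs]; rewrite big_cons => h.
have s0 := sum_ge0l hxs.
have xr : x < r by lra.
have r0 : 0 < r by lra.
have [E1 ->] := IH (r - x) hxs ltac:(lra).
split.
  have -> : r * (1 - x / r) = r - x.
    by rewrite mulrBr mulr1 mulrCA divff ?gt_eqF // mulr1.
  by rewrite E1 mulrCA divff ?gt_eqF // mulr1.
rewrite andbT /in01 divr_ge0 ?(ltW r0) //=.
by rewrite ltr_pdivrMr // mul1r.
Qed.


Local Open Scope ereal_scope.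
Lemma ev_esup (f : R -> \bar R) (c : \bar R) (M : R) :
  (forall th, (M < th)%R -> f th <= c) -> limf_esup f (pinfty_nbhs R) <= c.
Proof.
move=> h; rewrite limf_esupE.
apply: le_trans (ereal_inf_lbound _) _.
  exists [set th | (M < th)%R] => //; exists M; split => //.
  exact: num_real.
apply: ge_ereal_sup => _ [th /= hth <-]; exact: h.
Qed.

Lemma ev_einf (f : R -> \bar R) (c : \bar R) (M : R) :
  (forall th, (M < th)%R -> c <= f th) -> c <= limf_einf f (pinfty_nbhs R).
Proof.
move=> h; rewrite limf_einfE.
apply: le_trans _ (ereal_sup_ubound _).
  2: exists [set th | (M < th)%R] => //; exists M; split => //.
    2: exact: num_real.
apply: le_ereal_inf_tmp => _ [th /= hth <-]; exact: h.
Qed.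
Local Close Scope ereal_scope.


Lemma ln_growth (e l : R) n : 0 < e -> 0 <= l ->
  exists M, 1 <= M /\ forall th, M < th -> l + n%:R * ln th <= e * th.
Proof.
move=> e0 l0.
set K := 2 * n%:R / e + 1.
have n0 : 0 <= n%:R :> R by [].
have K0 : 0 < K.
  have : 0 <= 2 * n%:R / e by apply: divr_ge0; [apply: mulr_ge0|apply: ltW].
  rewrite /K; lra.
have Q0 : 0 <= 2 * (l + n%:R * `|ln K|) / e.
  apply: divr_ge0; last exact: ltW.
  apply: mulr_ge0 => //; apply: addr_ge0 => //; exact: mulr_ge0.
exists (1 + 2 * (l + n%:R * `|ln K|) / e); split; first lra.
move=> th hth.
have th0 : 0 < th by lra.
have h1 : ln th <= th / K + ln K.
  have := ln_sublinear (divr_gt0 th0 K0); rewrite ln_div ?posrE //; lra.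
have h2 : n%:R / K <= e / 2.
  rewrite ler_pdivrMr //.
  have -> : e / 2 * K = n%:R + e / 2 by rewrite /K; field; rewrite gt_eqF.
  lra.
have h3 : n%:R * ln th <= n%:R * (th / K) + n%:R * `|ln K|.
  rewrite -mulrDr ler_wpM2l //; apply: le_trans h1 _; rewrite lerD2l; exact: ler_norm.
have h4 : n%:R * (th / K) <= e / 2 * th.
  by rewrite mulrCA mulrC; apply: ler_wpM2r => //; exact: ltW.
have h5 : 2 * (l + n%:R * `|ln K|) / e < th - 1 by lra.
have h6 : 2 * (l + n%:R * `|ln K|) < e * th.
  move: h5; rewrite ltr_pdivrMr // => h5; apply: lt_le_trans h5 _.
  rewrite mulrC ler_wpM2l ?ltW //; lra.
lra.
Qed.


Lemma Pi_upper n (A : set 'rV[R]_n) (th l : R) : 1 < th ->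
  (forall s, size s = n -> all in01 s -> A (gem_vec n s) ->
     l <= - ln (\prod_(u <- s) (1 - u))) ->
  (Pi_gem th A <= (expR (- l * (th - 1)) * th ^+ n)%:E)%E.
Proof.
move=> th1 hA; rewrite /Pi_gem; apply: (iid_upper th1 (expR_ge0 _)).
  by move=> s; rewrite lee_fin indicE.
move=> s ss hs; rewrite indicE.
have P0 := prod_gt0 hs.
have rhs0 : 0 <= expR (- l * (th - 1)) * (\prod_(u <- s) (1 - u)) `^ (1 - th).
  by rewrite mulr_ge0 ?expR_ge0 ?powR_ge0.
case: (boolP (gem_vec n s \in A)) => [inA|]; last by rewrite lee_fin.
rewrite lee_fin /=.
have := hA s ss hs; rewrite -inE => /(_ inA) hl.
rewrite /powR gt_eqF // -expRD -[X in X <= _]expR0 ler_expR.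
have : 0 <= (th - 1) * (- l - ln (\prod_(u <- s) (1 - u))).
  by apply: mulr_ge0; lra.
lra.
Qed.


Lemma upper_core n (A : set 'rV[R]_n) (l : R) : 0 <= l ->
  (forall x, A x -> (l%:E <= S_rate x)%E) ->
  (limf_esup (fun th => log_speed th (Pi_gem th A)) (pinfty_nbhs R) <= (- l)%:E)%E.
Proof.
move=> l0 hA; apply/lee_addgt0Pr => e e0.
have [M [M1 hM]] := ln_growth n e0 l0.
apply: (@ev_esup _ _ M) => th hth.
have th1 : 1 < th by lra.
have th0 : 0 < th by lra.
have hP : (Pi_gem th A <= (expR (- l * (th - 1)) * th ^+ n)%:E)%E.
  apply: Pi_upper => // s ss hs hAs.
  by have := hA _ hAs; rewrite gem_S // lee_fin.
have p0 : (0 <= Pi_gem th A)%E.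
  by rewrite /Pi_gem; apply: iid_ge0 => [|s]; [exact: ltW| rewrite lee_fin indicE].
rewrite /log_speed; case: ifPn => [_|pn0]; first by rewrite leNye.
have pfin : Pi_gem th A \is a fin_num.
  by rewrite ge0_fin_numE // (le_lt_trans hP) // ltry.
move: hP p0 pn0; rewrite -(fineK pfin) lee_fin eqe => hP p0 pn0.
rewrite lee_fin in p0.
have q0 : 0 < fine (Pi_gem th A) by rewrite lt_neqAle eq_sym pn0 p0.
rewrite -EFinD lee_fin ler_pdivrMr //.
have := hM th hth.
have : ln (fine (Pi_gem th A)) <= - l * (th - 1) + n%:R * ln th.
  apply: le_trans (_ : ln (expR (- l * (th - 1)) * th ^+ n) <= _).
    by rewrite ler_ln // ?posrE // mulr_gt0 // ?expR_gt0 // exprn_gt0.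
  by rewrite lnM ?posrE ?expR_gt0 ?exprn_gt0 // expRK lnXn // mulr_natl.
lra.
Qed.


Lemma inbox_prop rho ts s : 0 < rho <= 1 -> all in01 ts -> inbox rho ts s ->
  [/\ size s = size ts, all in01 s & all2 (fun u t => `|u - t| <= 1 - rho) s ts].
Proof.
move=> /andP[r0 r1]; elim: ts s => [|t ts IH] [|u s] //= /andP[/andP[t0 t1] hts].
move=> /andP[/andP[tu ub] hb]; have [-> -> ->] := IH s hts hb.
have h1 : 0 < (1 - t) * rho by rewrite mulr_gt0 // subr_gt0.
have h2 : (1 - t) * (1 - rho) <= 1 - rho.
  by rewrite -[X in _ <= X]mul1r ler_wpM2r ?subr_ge0 // lerBlDr lerDl.
have h3 : (1 - t) * (1 - rho) = 1 - t - (1 - t) * rho by ring.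
split => //; rewrite !andbT.
  by rewrite /in01 (le_trans t0 tu) /=; lra.
rewrite ger0_norm ?subr_ge0 //; lra.
Qed.

Lemma sum_xs n (x : 'rV[R]_n) :
  \sum_(u <- [seq x ord0 i | i <- enum 'I_n]) u = \sum_(i < n) x ord0 i.
Proof. by rewrite big_map big_enum. Qed.

Lemma nth_xs n (x : 'rV[R]_n) (i : 'I_n) :
  nth 0 [seq x ord0 i | i <- enum 'I_n] i = x ord0 i.
Proof. by rewrite (nth_map i) ?size_enum_ord // nth_ord_enum. Qed.


Lemma sum_cont n : continuous (fun x : 'rV[R]_n => \sum_(i < n) x ord0 i).
Proof.
have := @continuous_big R 'I_n +%R 0 xpredT (fun p => add_continuous p) _ (index_enum _) (fun i (x : 'rV[R]_n) => x ord0 i).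
by apply => i _; apply: coord_continuous.
Qed.

Lemma closed_sumle n (c : R) : closed [set x : 'rV[R]_n | \sum_(i < n) x ord0 i <= c].
Proof.
have := (continuous_closedP _).1 (@sum_cont n) _ (@closed_le _ c).
by [].
Qed.

Lemma ball_mx n (x y : 'rV[R]_n) e : 0 < e -> (forall i, `|x ord0 i - y ord0 i| < e) -> ball x e y.
Proof.
move=> e0 h; rewrite /ball /=.
split => // i j; rewrite (ord1 i) /ball /=; exact: h.
Qed.

Lemma lower_core n (G : set 'rV[R]_n) (x : 'rV[R]_n) : (0 < n)%N -> open G -> G x ->
  @Delta R n x -> \sum_(i < n) x ord0 i < 1 ->
  ((ln (1 - \sum_(i < n) x ord0 i))%:E <=
    limf_einf (fun th => log_speed th (Pi_gem th (G `&` @Delta R n))) (pinfty_nbhs R))%E.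
Proof.
move=> n0 oG Gx [x0 _] sx1.
set sig := \sum_(i < n) x ord0 i.
have [del del0 hball] : exists2 del, 0 < del & ball x del `<=` G.
  by apply/nbhs_ballP; apply: open_nbhs_nbhs; split.
apply/lee_subgt0Pr => e e0.
set xs := [seq x ord0 i | i <- enum 'I_n].
have hxs0 : all (fun u => 0 <= u) xs.
  by apply/allP => u /mapP [i _ ->].
have [E1 hts] := target_ok hxs0 (ltac:(rewrite sum_xs subr_gt0 //) : 0 < 1 - \sum_(u <- xs) u).
set ts := target 1 xs in E1 hts.
have sts : size ts = n by rewrite /ts size_target size_map size_enum_ord.
have Pts : \prod_(u <- ts) (1 - u) = 1 - sig.
  have := sum_stick 1 ts; rewrite E1 sum_xs mul1r -/sig => ->; ring.
have nR : 0 < n%:R :> R by rewrite ltr0n.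
set rho := Num.max (expR (- (e / (2 * n%:R)))) (1 - del / (2 * n%:R)).
have hd : 0 < del / (2 * n%:R) by rewrite divr_gt0 // mulr_gt0.
have he : 0 < e / (2 * n%:R) by rewrite divr_gt0 // mulr_gt0.
have rho0 : 0 < rho by rewrite /rho lt_max expR_gt0.
have rho1 : rho < 1.
  rewrite /rho gt_max expR_lt1 /=; apply/andP; split; lra.
have lnrho : - (e / (2 * n%:R)) <= ln rho.
  rewrite -[X in X <= _]expRK ler_ln ?posrE ?expR_gt0 //.
  by rewrite /rho le_max lexx.
have rhod : 1 - rho <= del / (2 * n%:R).
  have : 1 - del / (2 * n%:R) <= rho by rewrite /rho le_max lexx orbT.
  lra.
have lnrho0 : ln rho <= 0 by apply: ln_le0; exact: ltW.
have [M [M1 hM]] : exists M, 1 <= M /\ forall th, M < th ->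
    - (e / 2 * th) <= n%:R * ln (1 - rho).
  exists (1 + 2 * n%:R * `|ln (1 - rho)| / e); split.
    have : 0 <= 2 * n%:R * `|ln (1 - rho)| / e.
      apply: divr_ge0; last exact: ltW.
      by apply: mulr_ge0 => //; apply: mulr_ge0 => //; exact: ltW.
    lra.
  move=> th hth.
  have : 2 * n%:R * `|ln (1 - rho)| / e < th by lra.
  rewrite ltr_pdivrMr // => h.
  have a1 : - `|ln (1 - rho)| <= ln (1 - rho) by rewrite lerNnormlW.
  have a2 : n%:R * - `|ln (1 - rho)| <= n%:R * ln (1 - rho) by rewrite ler_wpM2l // ltW.
  have a3 : - (e / 2 * th) <= n%:R * - `|ln (1 - rho)|.
    rewrite mulrN lerN2.
    have -> : e / 2 * th = (th * e) / 2 by rewrite mulrC mulrA.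
    rewrite ler_pdivlMr //; lra.
  lra.
apply: (@ev_einf _ _ M) => th hth.
have th1 : 1 < th by lra.
have th0 : 0 < th by lra.
set q := th * rho `^ (th - 1) * (1 - rho).
have q0 : 0 < q.
  by rewrite /q mulr_gt0 ?subr_gt0 // mulr_gt0 // powR_gt0.
have hL : ((q ^+ n * (1 - sig) `^ th)%:E <= Pi_gem th (G `&` @Delta R n))%E.
  have := @iid_lower th rho 1 ts (fun s => (\1_(G `&` @Delta R n) (gem_vec n s))%:E) (ltW th1).
  rewrite sts Pts mul1r; apply => //.
    by apply/andP.
  have rr : 0 < rho <= 1 by apply/andP; split; [exact: rho0 | exact: ltW].
  move=> s hb; have [ss hs herr] := inbox_prop rr hts hb.
  rewrite sts in ss.
  rewrite indicE; suff -> : gem_vec n s \in G `&` @Delta R n by [].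
  rewrite inE; split; last exact: gem_D (in01_c hs).
  apply: hball; apply: ball_mx => // i.
  rewrite /gem_vec mxE -(nth_xs x i) -/xs -E1 distrC.
  have e1 : size s = size ts by rewrite ss sts.
  have e2 : 0 <= 1 - rho by rewrite subr_ge0 ltW.
  have e3 : 0 <= (1:R) <= 1 by rewrite ler01 lexx.
  have := @stick_err s ts 1 1 (1 - rho) e1 (in01_c hs) (in01_c hts) herr e2 e3 e3 i.
  rewrite subrr normr0 add0r => h; apply: le_lt_trans h _.
  have a1 : i.+1%:R <= n%:R :> R by rewrite ler_nat.
  have a2 : i.+1%:R * (1 - rho) <= n%:R * (1 - rho) by rewrite ler_wpM2r.
  have a3 : n%:R * (1 - rho) <= n%:R * (del / (2 * n%:R)) by rewrite ler_wpM2l // ltW.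
  have a4 : n%:R * (del / (2 * n%:R)) = del / 2 by field; rewrite gt_eqF.
  lra.
have W0 : 0 < q ^+ n * (1 - sig) `^ th.
  by rewrite mulr_gt0 ?exprn_gt0 // powR_gt0 // subr_gt0.
have hU : (Pi_gem th (G `&` @Delta R n) <= (expR (- 0 * (th - 1)) * th ^+ n)%:E)%E.
  apply: Pi_upper => // s ss hs _; rewrite oppr_ge0; apply: ln_le0.
  rewrite big_seq; apply: prodr_ile1 => u /(allP hs) /andP[u0 u1].
  by rewrite subr_ge0 ltW //= lerBlDr lerDl.
have p0 : (0 < Pi_gem th (G `&` @Delta R n))%E by apply: lt_le_trans hL; rewrite lte_fin.
have pfin : Pi_gem th (G `&` @Delta R n) \is a fin_num.
  by rewrite ge0_fin_numE ?ltW // (le_lt_trans hU) // ltry.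
rewrite /log_speed gt_eqF //.
move: hL p0; rewrite -(fineK pfin) !lte_fin lee_fin => hL p0.
rewrite -EFinB lee_fin ler_pdivlMr // /=.
have hlnW : ln (q ^+ n * (1 - sig) `^ th) <= ln (fine (Pi_gem th (G `&` @Delta R n))).
  by rewrite ler_ln ?posrE.
have EW : ln (q ^+ n * (1 - sig) `^ th) =
    n%:R * ln th + n%:R * ((th - 1) * ln rho) + n%:R * ln (1 - rho) + th * ln (1 - sig).
  rewrite lnM ?posrE ?exprn_gt0 ?powR_gt0 ?subr_gt0 // lnXn // ln_powR -mulr_natl.
  rewrite /q lnM ?posrE ?mulr_gt0 ?powR_gt0 ?subr_gt0 // lnM ?posrE ?powR_gt0 //.
  by rewrite ln_powR; ring.
have A0 : 0 <= n%:R * ln th by rewrite mulr_ge0 // ln_ge0 // ltW.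
have b1 : - (e / 2) <= n%:R * ln rho.
  have : n%:R * - (e / (2 * n%:R)) <= n%:R * ln rho by rewrite ler_wpM2l // ltW.
  have -> : n%:R * - (e / (2 * n%:R)) = - (e / 2) by field; rewrite gt_eqF.
  by [].
have b2 : n%:R * ln rho <= 0 by rewrite mulr_ge0_le0 // ltW.
have B0 : - (e / 2 * th) <= n%:R * ((th - 1) * ln rho).
  have -> : n%:R * ((th - 1) * ln rho) = (th - 1) * (n%:R * ln rho) by ring.
  nra.
have C0 := hM th hth.
rewrite EW in hlnW; lra.
Qed.


Lemma lnrate (sig a : R) : sig < 1 ->
  (ln (1 / (1 - sig)) <= a) = (sig <= 1 - expR (- a)).
Proof.
move=> s1; have h : 0 < 1 - sig by rewrite subr_gt0.
rewrite div1r lnV ?posrE // lerNl -(ler_expR (- a)) lnK ?posrE //.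
by apply/idP/idP; lra.
Qed.

Lemma S_ge0 n (x : 'rV[R]_n) : @Delta R n x -> (0 <= S_rate x)%E.
Proof.
move=> [x0 _]; rewrite /S_rate; case: ifPn => [/andP[_ h]|_]; last exact: leey.
rewrite lee_fin ln_ge0 // div1r invf_ge1 ?subr_gt0 //.
by rewrite lerBlDr lerDl sumr_ge0.
Qed.

End Aux.

Theorem lemma2p1 (R : realType) (n : nat) : (0 < n)%N ->
  LDP (@Delta R n) (fun theta => @Pi_gem R n theta) (@S_rate R n).
Proof.
move=> n0; split.
- exact: S_ge0.
- move=> a; exists [set x : 'rV[R]_n | \sum_(i < n) x ord0 i <= 1 - expR (- a)]; split.
    exact: closed_sumle.
  apply/seteqP; split => x.
    move=> [Dx]; rewrite /S_rate; case: ifPn => [/andP[_ h]|_]; last by rewrite leye_eq.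
    by rewrite lee_fin lnrate // => ha; split.
  move=> [/= h Dx]; split => //.
  have s1 : \sum_(i < n) x ord0 i < 1.
    by apply: le_lt_trans h _; rewrite ltrBlDr ltrDl expR_gt0.
  rewrite /S_rate ifT; first by rewrite lee_fin lnrate.
  by rewrite s1 andbT; apply/forallP => i; case: Dx => + _; apply.
- move=> F _.
  have I0 : (0 <= ereal_inf (@S_rate R n @` (F `&` @Delta R n)))%E.
    by apply: le_ereal_inf_tmp => _ [x [_ Dx] <-]; exact: S_ge0.
  have key : forall l : R, 0 <= l ->
      (l%:E <= ereal_inf (@S_rate R n @` (F `&` @Delta R n)))%E ->
      (limf_esup (fun th => log_speed th (Pi_gem th (F `&` @Delta R n))) (pinfty_nbhs R)
        <= (- l)%:E)%E.
    move=> l l0 lI; apply: upper_core => // x Ax.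
    by apply: le_trans lI _; apply: ereal_inf_lbound; exists x.
  move: (ereal_inf _) I0 key => I I0 key.
  case: I I0 key => [r| |] I0 key //.
    rewrite lee_fin in I0.
    apply/lee_addgt0Pr => e e0.
    have mx0 : 0 <= Num.max 0 (r - e) by rewrite le_max lexx.
    have := key (Num.max 0 (r - e)) mx0.
    rewrite lee_fin ge_max I0 gerBl ltW // => /(_ erefl) h.
    apply: le_trans h _; rewrite lee_fin.
    have : r - e <= Num.max 0 (r - e) by rewrite le_max lexx orbT.
    lra.
  move: (limf_esup _ _) key => L key.
  case: L key => [r| |] key //.
    have rr0 : 0 <= `|r| + 1 by rewrite addr_ge0.
    have := key (`|r| + 1) rr0 (leey _).
    rewrite lee_fin => h; exfalso.
    have hr : - `|r| <= r by rewrite lerNnormlW.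
    clear -h hr; lra.
  by have := key 0 (lexx _) (leey _).
- move=> G oG; rewrite leeNl.
  apply: le_ereal_inf_tmp => _ [x [Gx Dx] <-].
  rewrite leeNl /S_rate; case: ifPn => [/andP[_ h]|_]; last by rewrite leNye.
  rewrite div1r lnV ?posrE ?subr_gt0 // EFinN oppeK.
  exact: lower_core.
Qed.
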